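(* Let $\mathbb{F}$ be a field, $d\geq3$ and $V$ a vector space over $\mathbb{F}$ of dimension $d+1$. Let $E^*_0,\dots,E^*_d$ be a system of mutually orthogonal idempotents in $\mathrm{End}(V)$ and $A\in\mathrm{End}(V)$ with $E^*_iAE^*_j=0$ if $|i-j|>1$ and $E^*_iAE^*_j\neq0$ if $|i-j|=1$. Assume $A$ is multiplicity-free and bipartite with primitive idempotents $E_0,\dots,E_d$. Let $\theta^*_0,\dots,\theta^*_d\in\mathbb{F}$ be mutually distinct and $A^*=\sum_i\theta^*_iE^*_i$. Assume $E_0$ is normalizing and $(E_0,E_1)$ is a tail. Then $\dfrac{\theta^*_j-\theta^*_{j-3}}{\theta^*_{j-1}-\theta^*_{j-2}}$ is independent of $j$ for $3\le j\le d$.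
   Context: A system of mutually orthogonal idempotents: $E^*_iE^*_j=\delta_{ij}E^*_i$, $\operatorname{rank}E^*_i=1$. $A$ multiplicity-free: $d+1$ distinct eigenvalues in $\mathbb{F}$; the primitive idempotent for an eigenvalue is the projection onto its eigenspace along the other eigenspaces. Bipartite: $\operatorname{tr}(E^*_iA)=0$ for all $i$. $\Delta$: graph on $E_0,\dots,E_d$ with $E_i\neq E_j$ adjacent iff $E_iA^*E_j\neq0$. $(E_0,E_1)$ is a tail if $E_0$ is adjacent to no vertex other than $E_1$ and $E_1$ is adjacent to at most one vertex other than $E_0$. The matrix $Y$ representing $A$ w.r.t. a basis $v_0,\dots,v_d$ satisfies $Av_j=\sum_iY_{ij}v_i$. An eigenvalue $\theta$ of $A$ is normalizing if some basis with $v_i\in E^*_iV$ makes every row sum of the matrix representing $A$ equal to $\theta$; a primitive idempotent is normalizing if its eigenvalue is. *)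

(* Defs.v *)
(* End(V) for dim V = n is modelled as 'M[F]_n acting on
   column vectors 'cV[F]_n by left multiplication (A v := A *m v). *)
From HB Require Import structures.
From mathcomp Require Import all_boot all_order all_algebra.
Set Implicit Arguments. Unset Strict Implicit. Unset Printing Implicit Defensive.
Import Order.TTheory GRing.Theory Num.Theory.
Local Open Scope ring_scope.

Section Defs.
Variables (F : fieldType) (n : nat).

Definition orth_idem_system (Es : 'I_n -> 'M[F]_n) : Prop :=
  (forall i j, Es i *m Es j = if i == j then Es i else 0) /\
  (forall i, \rank (Es i) = 1%N).

Definition is_eigenvalue (A : 'M[F]_n) (th : F) : Prop :=
  exists2 v : 'cV[F]_n, v != 0 & A *m v = th *: v.

Definition mult_free_eigs (A : 'M[F]_n) (th : 'I_n -> F) : Prop :=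
  injective th /\ forall i, is_eigenvalue A (th i).

(* E is the primitive idempotent of A for the eigenvalue th i: the projection
   onto the th i-eigenspace along the other eigenspaces (these span V when A
   is multiplicity-free). *)
Definition primitive_idem (A : 'M[F]_n) (th : 'I_n -> F) (i : 'I_n)
    (E : 'M[F]_n) : Prop :=
  forall (j : 'I_n) (v : 'cV[F]_n), A *m v = th j *: v ->
    E *m v = (if i == j then v else 0).

Definition bipartite (Es : 'I_n -> 'M[F]_n) (A : 'M[F]_n) : Prop :=
  forall i, \tr (Es i *m A) = 0.

Definition dual_mx (ths : 'I_n -> F) (Es : 'I_n -> 'M[F]_n) : 'M[F]_n :=
  \sum_i ths i *: Es i.

Definition Delta_adj (E : 'I_n -> 'M[F]_n) (As : 'M[F]_n) (i j : 'I_n) : Prop :=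
  i != j /\ E i *m As *m E j != 0.

Definition is_tail (E : 'I_n -> 'M[F]_n) (As : 'M[F]_n) (i0 i1 : 'I_n) : Prop :=
  (forall k, Delta_adj E As i0 k -> k = i1) /\
  (forall k l, k != i0 -> l != i0 -> Delta_adj E As i1 k -> Delta_adj E As i1 l ->
     k = l).

(* theta is normalizing: there is a basis v_0..v_{n-1} (columns of an
   invertible P) with v_i in E*_i V such that the matrix Y representing A
   (A v_j = sum_i Y_ij v_i, i.e. A P = P Y) has all row sums equal to theta. *)
Definition normalizing (Es : 'I_n -> 'M[F]_n) (A : 'M[F]_n) (th : F) : Prop :=
  exists (P Y : 'M[F]_n),
    [/\ P \in unitmx,
        forall i : 'I_n, exists w : 'cV[F]_n, col i P = Es i *m w,
        A *m P = P *m Y &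
        forall i : 'I_n, \sum_(j < n) Y i j = th].

End Defs.

(* Main.v *)
Require Import Defs.
From HB Require Import structures.
From mathcomp Require Import all_boot all_order all_algebra.
From mathcomp Require Import ring zify.
Import Order.TTheory GRing.Theory Num.Theory.
Local Open Scope ring_scope.


Section Scalar.
Variables (F : fieldType) (t0 t1 ka mu Q : F).
Let al := t1.
Let be := - (t0 + ka).
Let ga := - (t1 * Q / (t0 + t1)).
Let de := - (t1 * mu / t0).
Definition Gf (x y : F) := al * (x ^+ 2 + y ^+ 2) + be * x * y + ga * (x + y) + de.

Lemma G_step (a b c : F) : t0 != 0 -> t1 != 0 -> t0 + t1 != 0 ->
  Gf a b = 0 -> t1 * b * (a + c) - t0 * a * c - ka * b ^+ 2 = mu + Q * b ->
  t0 * a - t1 * b != 0 ->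
  c = - (be * b + ga) / al - a /\ Gf b c = 0.
Proof.
move=> h0 h1 h01 hG hR hne.
set c' := - (be * b + ga) / al - a.
have hR' : t1 * b * (a + c') - t0 * a * c' - ka * b ^+ 2 - (mu + Q * b)
   = (t0 / t1) * Gf a b.
  rewrite /c' /Gf /al /be /ga /de; field; by rewrite h1 h0 h01.
have hcc : c = c'.
  have : (t0 * a - t1 * b) * (c - c') = 0.
    have e : (t0 * a - t1 * b) * (c - c') =
      (t1 * b * (a + c') - t0 * a * c' - ka * b ^+ 2 - (mu + Q * b)) -
      (t1 * b * (a + c) - t0 * a * c - ka * b ^+ 2 - (mu + Q * b)) by ring.
    by rewrite e hR' hG mulr0 hR subrr subr0.
  by move/eqP; rewrite mulf_eq0 (negbTE hne) /= subr_eq0 => /eqP.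
split => //.
have e : Gf b c' = Gf a b.
  rewrite /c' /Gf /al /be /ga /de; field; by rewrite h1 h0 h01.
by rewrite hcc e.
Qed.
End Scalar.
Arguments Gf {F}. Arguments G_step {F}.


Lemma scalar_part (F : fieldType) (d : nat) (hd : (3 <= d)%N) (u bb cc : nat -> F)
  (t0 t1 ka mu Q : F) :
 (forall j, (j < d)%N -> bb j != 0) ->
 (forall j, (0 < j < d)%N -> cc j + bb j = t0) ->
 bb 0%N = t0 ->
 bb 0%N * u 1%N = t1 * u 0%N ->
 (forall j, (0 < j < d)%N -> cc j * u j.-1 + bb j * u j.+1 = t1 * u j) ->
 bb 0%N * u 1%N ^+ 2 - ka * u 0%N ^+2 = mu + Q * u 0%N ->
 (forall j, (0 < j < d)%N -> cc j * u j.-1 ^+2 + bb j * u j.+1 ^+2 - ka * u j ^+ 2 = mu + Q * u j) ->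
 (forall i j, (i <= d)%N -> (j <= d)%N -> u i = u j -> i = j) ->
 exists B C, forall j, (0 < j < d)%N -> u j.-1 + u j.+1 = B * u j + C.
Proof.
move=> hb hcb hb0 he0 he hs0 hs hinj.
have h0 : t0 != 0 by rewrite -hb0 hb //; lia.
have h1 : t1 != 0.
  apply/negP => /eqP t10.
  have u10 : u 1%N = 0.
    by move: he0; rewrite t10 mul0r => /eqP; rewrite mulf_eq0 (negbTE (hb 0%N _)) //=; [move/eqP|lia].
  have := he 2%N; rewrite /= u10 mulr0 add0r t10 mul0r => /(_ ltac:(lia)) /eqP.
  rewrite mulf_eq0 (negbTE (hb 2%N _)) /=; last lia.
  move=> /eqP u30; have := hinj 1%N 3%N; rewrite u10 u30 => /(_ ltac:(lia) ltac:(lia) erefl).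
  by [].
have h01 : t0 + t1 != 0.
  apply/negP => /eqP e01.
  have t1e : t1 = - t0 by apply/eqP; rewrite -addr_eq0 addrC e01.
  have u1e : u 1%N = - u 0%N.
    apply: (mulfI h0); rewrite -{1}hb0 he0 t1e; ring.
  have := he 1%N; rewrite /= => /(_ ltac:(lia)) e1.
  have c1e := hcb 1%N ltac:(lia).
  have : bb 1%N * (u 2%N - u 0%N) = 0.
    have cc1 : cc 1%N = t0 - bb 1%N by rewrite -c1e; ring.
    rewrite cc1 u1e t1e in e1. rewrite -[LHS]subr0 -(subrr (- t0 * - u 0%N)).
    rewrite -{1}e1; ring.
  move/eqP; rewrite mulf_eq0 (negbTE (hb 1%N _)) /= ?subr_eq0; last lia.
  by move=> /eqP /hinj => /(_ ltac:(lia) ltac:(lia)).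
have hG : forall j, (0 < j <= d)%N -> Gf t0 t1 ka mu Q (u j.-1) (u j) = 0.
  elim=> [|j IH] //= hj.
  case: j IH hj => [|j] IH hj.
    have u1e : u 1%N = t1 * u 0%N / t0 by rewrite -he0 hb0; field.
    have mue : mu = t0 * u 1%N ^+ 2 - ka * u 0%N ^+ 2 - Q * u 0%N by move: hs0; rewrite hb0 => ->; ring.
    rewrite /Gf mue u1e; field; by rewrite h0 h01.
  have := IH ltac:(lia); rewrite /= => hGj.
  have hj' : (0 < j.+1 < d)%N by lia.
  have hR : t1 * u j.+1 * (u j + u j.+2) - t0 * u j * u j.+2 - ka * u j.+1 ^+ 2 = mu + Q * u j.+1.
    rewrite -(hs _ hj') /=. have := he _ hj'; have := hcb _ hj'; rewrite /= => ec ee.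
    rewrite -ee -ec; ring.
  have hne : t0 * u j - t1 * u j.+1 != 0.
    have ee := he _ hj'; have ec := hcb _ hj'; rewrite /= in ee ec.
    have -> : t0 * u j - t1 * u j.+1 = bb j.+1 * (u j - u j.+2).
      rewrite -ee -ec; ring.
    rewrite mulf_neq0 //; first by apply: hb; lia.
    rewrite subr_eq0; apply/eqP => /hinj; lia.
  by case: (G_step t0 t1 ka mu Q _ _ _ h0 h1 h01 hGj hR hne).
exists (- (- (t0 + ka)) / t1), (- (- (t1 * Q / (t0 + t1))) / t1) => j hj.
case: j hj => [|j] hj //.
have hj' : (0 < j.+1 < d)%N by lia.
have hR : t1 * u j.+1 * (u j + u j.+2) - t0 * u j * u j.+2 - ka * u j.+1 ^+ 2 = mu + Q * u j.+1.
  rewrite -(hs _ hj') /=. have := he _ hj'; have := hcb _ hj'; rewrite /= => ec ee.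
  rewrite -ee -ec; ring.
have hne : t0 * u j - t1 * u j.+1 != 0.
  have ee := he _ hj'; have ec := hcb _ hj'; rewrite /= in ee ec.
  have -> : t0 * u j - t1 * u j.+1 = bb j.+1 * (u j - u j.+2).
    rewrite -ee -ec; ring.
  rewrite mulf_neq0 //; first by apply: hb; lia.
  rewrite subr_eq0; apply/eqP => /hinj; lia.
have := hG j.+1 ltac:(lia); rewrite /= => hGj.
case: (G_step t0 t1 ka mu Q _ _ _ h0 h1 h01 hGj hR hne) => -> _ /=.
field; by rewrite h1.
Qed.


Section Tri.
Variables (F : fieldType) (d : nat).
Local Notation n := d.+1.

Lemma sum_nb (f : 'I_n -> F) (j : nat) : (j <= d)%N ->
  (forall i : 'I_n, i.+1 != j -> (i : nat) != j.+1 -> f i = 0) ->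
  \sum_i f i = (if (0 < j)%N then f (inord j.-1) else 0) +
               (if (j < d)%N then f (inord j.+1) else 0).
Proof.
move=> hj hf.
have -> : \sum_i f i = \sum_(i < n) ((if i.+1 == j then f i else 0) + (if (i : nat) == j.+1 then f i else 0)).
  apply: eq_bigr => i _.
  case: eqP => [e1|/eqP n1]; case: eqP => [e2|/eqP n2]; try lia.
  - by rewrite addr0.
  - by rewrite add0r.
  - by rewrite addr0 hf.
rewrite big_split /=; congr (_ + _).
- case: ifP => hj0.
  + rewrite (bigD1 (inord j.-1)) //= inordK; last lia.
    rewrite prednK // eqxx big1 ?addr0 // => i /eqP hi.
    case: eqP => // e; case: hi; apply: val_inj; rewrite /= inordK; lia.
  + rewrite big1 // => i _; case: eqP => //; lia.
- case: ifP => hjd.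
  + rewrite (bigD1 (inord j.+1)) //= inordK; last lia.
    rewrite eqxx big1 ?addr0 // => i /eqP hi.
    case: eqP => // e; case: hi; apply: val_inj; rewrite /= inordK; lia.
  + rewrite big1 // => i _; case: eqP => //; have := ltn_ord i; lia.
Qed.


Variables (Y : 'M[F]_n) (t0 : F).
Hypothesis htri : forall i j : 'I_n, i.+1 != j -> (j : nat).+1 != i -> Y i j = 0.
Hypothesis hnz : forall i j : 'I_n, i.+1 = j -> Y i j != 0 /\ Y j i != 0.
Hypothesis hrow : forall i, \sum_j Y i j = t0.

Local Notation yy i j := (Y (inord i) (inord j)).

Lemma T1 (z : 'cV_n) j : (j <= d)%N -> (Y *m z) (inord j) 0 =
  (if (0 < j)%N then yy j j.-1 * z (inord j.-1) 0 else 0) +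
  (if (j < d)%N then yy j j.+1 * z (inord j.+1) 0 else 0).
Proof.
move=> hj; rewrite mxE (sum_nb _ _ hj) // => i h1 h2.
by rewrite htri ?mul0r // inordK //; lia.
Qed.

Lemma T2 (g : 'rV_n) j : (j <= d)%N -> (g *m Y) 0 (inord j) =
  (if (0 < j)%N then g 0 (inord j.-1) * yy j.-1 j else 0) +
  (if (j < d)%N then g 0 (inord j.+1) * yy j.+1 j else 0).
Proof.
move=> hj; rewrite mxE (sum_nb _ _ hj) // => i h1 h2.
by rewrite htri ?mulr0 // inordK //; lia.
Qed.

Lemma Trow j : (j <= d)%N ->
  (if (0 < j)%N then yy j j.-1 else 0) + (if (j < d)%N then yy j j.+1 else 0) = t0.
Proof.
move=> hj; rewrite -(hrow (inord j)) (sum_nb _ _ hj) // => i h1 h2.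
by rewrite htri // inordK //; lia.
Qed.

Lemma yy_nz j : (j < d)%N -> yy j j.+1 != 0 /\ yy j.+1 j != 0.
Proof. move=> hj; apply: hnz; rewrite !inordK //; lia. Qed.


Lemma sym_om (om : 'rV_n) : om *m Y = t0 *: om ->
  forall j, (j < d)%N -> om 0 (inord j) * yy j j.+1 = om 0 (inord j.+1) * yy j.+1 j.
Proof.
move=> hom; elim=> [|j IH] hj.
  have := T2 om 0 ltac:(lia); rewrite hom /= hj add0r mxE => <-.
  have := Trow 0 ltac:(lia); rewrite /= hj add0r => ->; by rewrite mulrC.
have := T2 om j.+1 ltac:(lia); rewrite hom /= hj mxE.
have := Trow j.+1 ltac:(lia); rewrite /= hj => ht.
rewrite IH; last lia.
set a := om 0 (inord j.+1); set b := om 0 (inord j.+2); set p := yy j.+1 j.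
set q := yy j.+1 j.+2; set r := yy j.+2 j.+1.
move=> e; rewrite -ht in e.
apply/eqP; rewrite -subr_eq0; apply/eqP.
have -> : a * q - b * r = (a * (p + q)) - (a * p + b * r) by ring.
by rewrite -e mulrC subrr.
Qed.


Lemma om_nz (om : 'rV_n) : om *m Y = t0 *: om -> om != 0 ->
  forall j, (j <= d)%N -> om 0 (inord j) != 0.
Proof.
move=> hom hnz0.
have step : forall j, (j < d)%N -> (om 0 (inord j) == 0) = (om 0 (inord j.+1) == 0).
  move=> j hj; have [h1 h2] := yy_nz _ hj.
  apply/idP/idP => /eqP h.
  - have := sym_om om hom _ hj; rewrite h mul0r => /esym/eqP; rewrite mulf_eq0 (negbTE h2) orbF.
    done.
  - have := sym_om om hom _ hj; rewrite h mul0r => /eqP; rewrite mulf_eq0 (negbTE h1) orbF.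
    done.
have all0 : forall j, (j <= d)%N -> (om 0 (inord j) == 0) = (om 0 (inord 0) == 0).
  elim=> [|j IH] hj //; rewrite -step; last lia. by apply: IH; lia.
have h0 : om 0 (inord 0) != 0.
  apply/negP => h; move/negP: hnz0; apply; apply/eqP/rowP => k.
  rewrite mxE -(inord_val k); apply/eqP; rewrite all0 //; have := ltn_ord k; lia.
by move=> j hj; rewrite all0.
Qed.

Lemma reig0 (z : 'cV_n) a : Y *m z = a *: z -> z (inord 0) 0 = 0 -> z = 0.
Proof.
move=> hz h0.
have key : forall j, (j < d)%N -> z (inord j) 0 = 0 /\ z (inord j.+1) 0 = 0.
  elim=> [|j IH] hj.
    split => //; have := T1 z 0 ltac:(lia); rewrite hz mxE h0 mulr0 /= hj add0r.
    move=> /esym/eqP; rewrite mulf_eq0 (negbTE (yy_nz _ hj).1) /=; by move/eqP.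
  have [e1 e2] := IH ltac:(lia); split => //.
  have := T1 z j.+1 ltac:(lia); rewrite hz mxE e2 mulr0 /= hj e1 mulr0 add0r.
  move=> /esym/eqP; rewrite mulf_eq0 (negbTE (yy_nz _ hj).1) /=; by move/eqP.
apply/colP => k; rewrite mxE -(inord_val k).
have := ltn_ord k; case: (nat_of_ord k) => [|k'] hk; first by [].
by have [] := key k' ltac:(lia).
Qed.

Lemma reig_uniq (z w : 'cV_n) a : Y *m z = a *: z -> Y *m w = a *: w ->
  w (inord 0) 0 != 0 -> z = (z (inord 0) 0 / w (inord 0) 0) *: w.
Proof.
move=> hz hw hw0; apply/eqP; rewrite -subr_eq0; apply/eqP.
apply: (reig0 _ a).
  by rewrite mulmxBr hz -scalemxAr hw !scalerA mulrC scalerBr scalerA.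
by rewrite !mxE divfK // subrr.
Qed.


Definition rmul (om : 'rV[F]_n) (z : 'cV[F]_n) : 'rV[F]_n := \row_j (om 0 j * z j 0).

Lemma rmul_Y om : om *m Y = t0 *: om -> forall z, rmul om z *m Y = rmul om (Y *m z).
Proof.
move=> hom z; apply/rowP => k; rewrite -(inord_val k); have hk := ltn_ord k.
move: (nat_of_ord k) hk => j hj.
rewrite [RHS]mxE (T1 _ j); last lia.
rewrite (T2 _ j); last lia.
rewrite !mxE.
rewrite mulrDr; congr (_ + _).
  case: j hj => [|j] hj /=; first by rewrite mulr0.
  have := sym_om om hom j ltac:(lia) => e.
  by rewrite mulrAC e; ring.
case: ifP => h; last by rewrite mulr0.
have := sym_om om hom j h => e.
by rewrite mulrAC -e; ring.
Qed.

Lemma rmul_lin om : om *m Y = t0 *: om -> forall z a,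
  rmul om z *m (Y - a%:M) = rmul om ((Y - a%:M) *m z).
Proof.
move=> hom z a; rewrite mulmxBr mulmxBl rmul_Y // mul_mx_scalar mul_scalar_mx.
by apply/rowP => k; rewrite !mxE; ring.
Qed.

Lemma rmul0 (om : 'rV[F]_n) (z : 'cV[F]_n) : (forall j, (j <= d)%N -> om 0 (inord j) != 0) -> rmul om z = 0 -> z = 0.
Proof.
move=> hnz0 h; apply/colP => k; have := congr1 (fun M : 'rV[F]_n => M 0 k) h.
rewrite !mxE => /eqP; rewrite mulf_eq0 -{1}(inord_val k) (negbTE (hnz0 _ _)) /=.
  by move/eqP.
have := ltn_ord k; lia.
Qed.

Lemma commYY a b (w : 'cV_n) :
  (Y - a%:M) *m ((Y - b%:M) *m w) = (Y - b%:M) *m ((Y - a%:M) *m w).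
Proof.
rewrite !mulmxA; congr (_ *m w).
rewrite !mulmxBl !mulmxBr -!scalar_mxM mulrC !mul_mx_scalar !mul_scalar_mx.
by apply/matrixP => i j; rewrite !mxE; ring.
Qed.


Lemma Y_ones : Y *m const_mx 1 = t0 *: (const_mx 1 : 'cV[F]_n).
Proof.
apply/colP => k; rewrite !mxE -(hrow k) mulr1; apply: eq_bigr => j _; by rewrite mxE mulr1.
Qed.

Lemma eig_eq (z : 'cV[F]_n) a : (Y - a%:M) *m z = 0 -> Y *m z = a *: z.
Proof. by rewrite mulmxBl mul_scalar_mx => /subr0_eq. Qed.

Lemma eig_eq' (z : 'cV[F]_n) a : Y *m z = a *: z -> (Y - a%:M) *m z = 0.
Proof. by rewrite mulmxBl mul_scalar_mx => ->; rewrite subrr. Qed.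

Lemma Ymain (hd : (2 < d)%N) (x : 'I_n -> F) (t1 c : F) (om om1 : 'rV[F]_n) :
 injective x -> t0 != t1 ->
 om *m Y = t0 *: om -> om != 0 -> om1 *m Y = t1 *: om1 -> om1 != 0 ->
 om *m diag_mx (\row_i x i) *m (Y - t0%:M) *m (Y - t1%:M) = 0 ->
 om1 *m diag_mx (\row_i x i) *m (Y - t0%:M) *m (Y - t1%:M) *m (Y - c%:M) = 0 ->
 exists K, forall j, (3 <= j <= d)%N ->
   x (inord j) - x (inord (j - 3)) = K * (x (inord j.-1) - x (inord (j - 2))).
Proof.
move=> xinj h01 hom homnz hom1 hom1nz H1 H2.
set xc : 'cV[F]_n := \col_i x i.
set ones : 'cV[F]_n := const_mx 1.
have omnz := om_nz om hom homnz.
have omnz' : forall k : 'I_n, om 0 k != 0.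
  move=> k; rewrite -(inord_val k); apply: omnz; have := ltn_ord k; lia.
have hD : forall g : 'rV[F]_n, g *m diag_mx (\row_i x i) = rmul g xc.
  by move=> g; apply/rowP => k; rewrite mul_mx_diag !mxE.
move: H1; rewrite hD (rmul_lin om hom) (rmul_lin om hom) => /(rmul0 _ _ omnz) hu.
set u := (Y - t0%:M) *m xc.
have Yu : Y *m u = t1 *: u by apply: eig_eq.
have ones0 : ones (inord 0) 0 = 1 by rewrite mxE.
have hu0 : u (inord 0) 0 != 0.
  apply/negP => /eqP e; have u0 := reig0 _ _ Yu e.
  have Yx : Y *m xc = t0 *: xc by apply: eig_eq; rewrite -/u u0.
  have := reig_uniq _ _ _ Yx Y_ones; rewrite ones0 divr1 oner_neq0 => /(_ isT) ex.
  have : x (inord 0) = x (inord 1).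
    by have := congr1 (fun M : 'cV[F]_n => M (inord 1) 0) ex; rewrite !mxE mulr1.
  move=> /xinj /(congr1 val); rewrite /= !inordK //; lia.
set z1 : 'cV[F]_n := \col_j (om1 0 j / om 0 j).
have hz1 : rmul om z1 = om1 by apply/rowP => k; rewrite !mxE mulrC divfK.
have Yz1 : Y *m z1 = t1 *: z1.
  apply: eig_eq; apply: (rmul0 _ _ omnz); rewrite -rmul_lin // hz1.
  by rewrite mulmxBr hom1 mul_mx_scalar subrr.
have z10 : z1 (inord 0) 0 != 0.
  apply/negP => /eqP e; have := reig0 _ _ Yz1 e => z0.
  by move: hom1nz; rewrite -hz1 z0; apply/negP/negPn/eqP/rowP => k; rewrite !mxE mulr0.
set k1 := z1 (inord 0) 0 / u (inord 0) 0.
have ez1 : z1 = k1 *: u := reig_uniq _ _ _ Yz1 Yu hu0.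
have k1nz : k1 != 0 by rewrite mulf_neq0 // invr_eq0.
set e := (t1 - t0)^-1.
have he : (t1 - t0) * e = 1 by rewrite mulfV // subr_eq0 eq_sym.
have Ytu : (Y - t0%:M) *m u = (t1 - t0) *: u.
  by rewrite mulmxBl Yu mul_scalar_mx scalerBl.
set v := xc - e *: u.
have Yv : Y *m v = t0 *: v.
  apply: eig_eq; rewrite mulmxBr -/u -scalemxAr Ytu scalerA mulrC he scale1r subrr //.
have ev := reig_uniq _ _ _ Yv Y_ones ltac:(by rewrite ones0 oner_neq0).
rewrite ones0 divr1 in ev.
set a0 : F := v (inord 0) 0 in ev.
have hx : forall k, x k = a0 + e * u k 0.
  move=> k; have := congr1 (fun M : 'cV[F]_n => M k 0) ev.
  rewrite !mxE mulr1 => <-; ring.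
clearbody u.
set w : 'cV[F]_n := \col_j (z1 j 0 * x j).
move: H2; rewrite -hz1 hD.
have -> : rmul (rmul om z1) xc = rmul om w.
  by apply/rowP => k; rewrite !mxE !mulrA.
rewrite !(rmul_lin om hom) => /(rmul0 _ _ omnz) H2.
set uu : 'cV[F]_n := \col_j (u j 0 ^+ 2).
have ew : w = (k1 * a0) *: u + (k1 * e) *: uu.
  apply/colP => k; rewrite /w ez1 !mxE hx; ring.
have Lu : (Y - c%:M) *m ((Y - t1%:M) *m ((Y - t0%:M) *m u)) = 0.
  by rewrite Ytu -scalemxAr (eig_eq' _ _ Yu) scaler0 mulmx0.
have enz : e != 0 by apply/negP => /eqP e0; move: he; rewrite e0 mulr0 => /eqP; rewrite eq_sym oner_eq0.
have Luu : (Y - c%:M) *m ((Y - t1%:M) *m ((Y - t0%:M) *m uu)) = 0.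
  move: H2; rewrite ew !mulmxDr -!scalemxAr Lu scaler0 add0r => /eqP.
  by rewrite scaler_eq0 mulf_eq0 (negbTE k1nz) (negbTE enz) /= => /eqP.
set sv := (Y - c%:M) *m uu.
have Ysv : (Y - t1%:M) *m ((Y - t0%:M) *m sv) = 0.
  by rewrite /sv (commYY t0 c uu) (commYY t1 c).
set r := (Y - t0%:M) *m sv.
have Yr : Y *m r = t1 *: r by apply: eig_eq.
have er := reig_uniq _ _ _ Yr Yu hu0.
set lam : F := r (inord 0) 0 / u (inord 0) 0 in er.
set q := sv - (lam * e) *: u.
have Yq : Y *m q = t0 *: q.
  apply: eig_eq; rewrite mulmxBr -/r er -scalemxAr Ytu scalerA -mulrA (mulrC e) he mulr1 subrr //.
have eq := reig_uniq _ _ _ Yq Y_ones ltac:(by rewrite ones0 oner_neq0).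
rewrite ones0 divr1 in eq.
set mu : F := q (inord 0) 0 in eq.
have hs : forall k, ((Y *m uu) k 0) - c * u k 0 ^+ 2 = mu + (lam * e) * u k 0.
  move=> k; have := congr1 (fun M : 'cV[F]_n => M k 0) eq.
  rewrite /q /sv mulmxBl mul_scalar_mx !mxE mulr1 => <-; ring.
have Tu := T1 u; have Tuu := T1 uu.
have [B [C hBC]] : exists B C, forall j, (0 < j < d)%N ->
    u (inord j.-1) 0 + u (inord j.+1) 0 = B * u (inord j) 0 + C.
  apply: (scalar_part _ _ hd (fun j => u (inord j) 0) (fun j => yy j j.+1)
      (fun j => yy j j.-1) t0 t1 c mu (lam * e)).
  - by move=> j hj; case: (yy_nz _ hj).
  - move=> j hj; have := Trow j ltac:(lia); by rewrite !ifT //; lia.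
  - by have := Trow 0 ltac:(lia); rewrite /= ifT ?add0r //; lia.
  - have := Tu 0 ltac:(lia); rewrite Yu /= ifT ?add0r ?mxE; last lia. by move=> <-.
  - move=> j hj; have := Tu j ltac:(lia); rewrite Yu !ifT ?mxE //; try lia.
  - move: (hs (inord 0)); rewrite (Tuu 0); last lia.
    rewrite /= ifT; last lia. by rewrite add0r !mxE.
  - move=> j hj; move: (hs (inord j)); rewrite (Tuu j); last lia.
    rewrite !ifT; try lia. by rewrite !mxE.
  - move=> i j hi hj e1.
    have : x (inord i) = x (inord j) by rewrite !hx e1.
    by move=> /xinj /(congr1 val); rewrite /= !inordK //; lia.
exists (B + 1) => j hj.
have hj3 : j = (j - 3).+3 by lia.
move: hj; rewrite hj3; move: (j - 3)%N => m hm.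
rewrite !hx /= !subSS subn0.
have e1 := hBC m.+1 ltac:(lia); have e2 := hBC m.+2 ltac:(lia); rewrite /= in e1 e2.
have -> : u (inord m.+3) 0 = B * u (inord m.+2) 0 + C - u (inord m.+1) 0 by rewrite -e2; ring.
have -> : u (inord m) 0 = B * u (inord m.+1) 0 + C - u (inord m.+2) 0 by rewrite -e1; ring.
ring.
Qed.

End Tri.


Section Eig.
Variables (F : fieldType) (m : nat).
Local Notation n := m.+1.

Lemma colext (p : nat) (M N : 'M[F]_(p, n)) :
  (forall k, M *m delta_mx k (0:'I_1) = N *m delta_mx k 0) -> M = N.
Proof.
move=> h; apply/matrixP => i k; have := congr1 (fun X : 'cV[F]_p => X i 0) (h k).
by rewrite -!colE !mxE.
Qed.

Lemma prod_eig (A : 'M[F]_n) (v : 'cV[F]_n) a (th : 'I_n -> F) (P : pred 'I_n) :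
  A *m v = a *: v ->
  (\prod_(i | P i) (A - (th i)%:M)) *m v = (\prod_(i | P i) (a - th i)) *: v.
Proof.
move=> hv.
apply: (big_rec2 (fun M s => M *m v = s *: v)); first by rewrite mul1mx scale1r.
move=> i M s _ IH; rewrite -mulmxE -mulmxA IH -scalemxAr mulmxBl hv mul_scalar_mx.
by rewrite -scalerBl scalerA mulrC.
Qed.


Lemma eig_basis (A : 'M[F]_n) (th : 'I_n -> F) (E : 'I_n -> 'M[F]_n) :
  mult_free_eigs A th -> (forall i, primitive_idem A th i (E i)) ->
  exists V : 'M[F]_n, [/\ V \in unitmx, A *m V = V *m diag_mx (\row_k th k) &
     forall i, E i = V *m delta_mx i i *m invmx V].
Proof.
case=> thinj heig hE.
have [vf hvf] : exists vf : 'I_n -> 'cV[F]_n, forall i, vf i != 0 /\ A *m vf i = th i *: vf i.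
  apply: (@fin_all_exists _ (fun _ => 'cV[F]_n) (fun i v => v != 0 /\ A *m v = th i *: v)) => i; have [v hv1 hv2] := heig i; by exists v.
set V : 'M[F]_n := \matrix_(i, k) vf k i 0.
have hVcol : forall k, V *m delta_mx k 0 = vf k.
  by move=> k; apply/colP => i; rewrite -colE !mxE.
have entry : forall (Q : 'M[F]_n) i k, (Q *m V) i k = (Q *m vf k) i 0.
  by move=> Q i k; rewrite !mxE; apply: eq_bigr => j _; rewrite mxE.
have AV : A *m V = V *m diag_mx (\row_k th k).
  apply/matrixP => i k; rewrite entry (hvf k).2 mul_mx_diag !mxE mulrC.
  by [].
have Vu : V \in unitmx.
  rewrite unitmxE unitfE -det_tr; apply/negP => /det0P [c cnz hc].
  have [k hk] : exists k, c 0 k != 0.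
    apply/existsP; apply: contraR cnz => /existsPn h; apply/eqP/rowP => k.
    by rewrite mxE; have := h k; move/negPn/eqP.
  set cc := c^T.
  have Vc : V *m cc = 0 by rewrite /cc -(trmxK V) -trmx_mul hc trmx0.
  set Q := \prod_(i | i != k) (A - (th i)%:M).
  set pi := fun j => \prod_(i | i != k) (th j - th i).
  have QV : Q *m V = V *m diag_mx (\row_j pi j).
    apply/matrixP => i j; rewrite entry (prod_eig _ _ _ _ _ (hvf j).2) mul_mx_diag !mxE.
    by rewrite mulrC.
  have dc : diag_mx (\row_j pi j) *m cc = (pi k * cc k 0) *: delta_mx k 0.
    apply/colP => i; rewrite mul_diag_mx !mxE.
    case: (eqVneq i k) => [->|ne]; first by rewrite eqxx mulr1.
    rewrite /= mulr0 /pi (bigD1 i) //= subrr !mul0r //.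
  have : V *m ((pi k * cc k 0) *: delta_mx k (0:'I_1)) = 0.
    by rewrite -dc mulmxA -QV -mulmxA Vc mulmx0.
  rewrite -scalemxAr hVcol => /eqP; rewrite scaler_eq0 (negbTE (hvf k).1) orbF.
  apply/negP; rewrite mulf_neq0 //; last by rewrite /cc mxE.
  apply/prodf_neq0 => i hi; by rewrite subr_eq0; apply: contra hi => /eqP /thinj ->.
exists V; split => // i.
have EV : E i *m V = V *m delta_mx i i.
  apply: colext => k; rewrite -mulmxA hVcol (hE i k (vf k) (hvf k).2).
  rewrite -mulmxA mul_delta_mx_cond.
  case: (eqVneq i k) => [->|ne]; first by rewrite mulr1n hVcol.
  by rewrite mulr0n mulmx0.
by rewrite -EV mulmxK.
Qed.

End Eig.


Section PW.
Variables (F : fieldType) (m : nat).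
Local Notation n := m.+1.

Lemma sandwich (Y : 'M[F]_n) i j :
  delta_mx i i *m Y *m delta_mx j j = Y i j *: delta_mx i j.
Proof.
rewrite -(mul_delta_mx (0:'I_1) i i) -(mul_delta_mx (0:'I_1) j j).
rewrite !mulmxA -(mulmxA _ (delta_mx 0 i)) -rowE -(mulmxA _ (row i Y)) -colE.
rewrite [col j (row i Y)]mx11_scalar !mxE mul_mx_scalar -scalemxAl mul_delta_mx.
done.
Qed.

Lemma conj_nz (P : 'M[F]_n) i j : P \in unitmx -> P *m delta_mx i j *m invmx P != 0.
Proof.
move=> Pu; apply/negP => /eqP h.
have : delta_mx i j = 0 :> 'M[F]_n.
  have e : invmx P *m (P *m delta_mx i j *m invmx P) *m P = delta_mx i j.
    by rewrite mulmxA mulmxKV // mulKmx.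
  by rewrite -e h mulmx0 mul0mx.
move/matrixP => /(_ i j); rewrite !mxE !eqxx /= => /eqP; by rewrite oner_eq0.
Qed.

Lemma tr_delta (Y : 'M[F]_n) i : \tr (delta_mx i i *m Y) = Y i i.
Proof.
rewrite -(mul_delta_mx (0:'I_1) i i) -mulmxA -rowE mxtrace_mulC -colE.
by rewrite /mxtrace big_ord1 !mxE.
Qed.

End PW.


Lemma shift_row (F : fieldType) (n : nat) (A : 'M[F]_n) (r : 'rV[F]_n) t a :
  r *m A = t *: r -> r *m (A - a%:M) = (t - a) *: r.
Proof. by move=> h; rewrite mulmxBr h mul_mx_scalar scalerBl. Qed.

Lemma conjP (F : fieldType) (n : nat) (P X : 'M[F]_n) (r : 'rV[F]_n) :
  P \in unitmx -> (r *m P) *m (invmx P *m X *m P) = r *m X *m P.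
Proof. by move=> Pu; rewrite !mulmxA mulmxK. Qed.

Lemma chain2 (F : fieldType) (n : nat) (A : 'M[F]_n) (r : 'rV[F]_n) t a b :
  r *m A = t *: r -> r *m (A - a%:M) *m (A - b%:M) = ((t - a) * (t - b)) *: r.
Proof.
move=> h; rewrite (shift_row _ _ _ _ _ _ h) -scalemxAl (shift_row _ _ _ _ _ _ h).
by rewrite scalerA mulrC.
Qed.

Lemma chain3 (F : fieldType) (n : nat) (A : 'M[F]_n) (r : 'rV[F]_n) t a b c :
  r *m A = t *: r -> r *m (A - a%:M) *m (A - b%:M) *m (A - c%:M) =
    ((t - a) * (t - b) * (t - c)) *: r.
Proof.
move=> h; rewrite (chain2 _ _ _ _ _ _ _ h) -scalemxAl (shift_row _ _ _ _ _ _ h).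
by rewrite scalerA mulrC.
Qed.

Theorem proposition9p4 (F : fieldType) (d : nat) (hd : (3 <= d)%N)
  (Es : 'I_d.+1 -> 'M[F]_d.+1) (A : 'M[F]_d.+1)
  (th : 'I_d.+1 -> F) (E : 'I_d.+1 -> 'M[F]_d.+1) (ths : 'I_d.+1 -> F) :
  orth_idem_system Es ->
  (forall i j : 'I_d.+1, (1 < `|(i : int) - (j : int)|)%N ->
     Es i *m A *m Es j = 0) ->
  (forall i j : 'I_d.+1, `|(i : int) - (j : int)|%N = 1%N ->
     Es i *m A *m Es j != 0) ->
  mult_free_eigs A th ->
  bipartite Es A ->
  (forall i, primitive_idem A th i (E i)) ->
  injective ths ->
  normalizing Es A (th ord0) ->
  is_tail E (dual_mx ths Es) ord0 (inord 1) ->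
  exists c : F, forall j : nat, (3 <= j <= d)%N ->
    (ths (inord j) - ths (inord (j - 3))) /
      (ths (inord j.-1) - ths (inord (j - 2))) = c.
Proof.
move=> hEs hfar hnear hmf hbip hprim hths hnorm htail.
case: hnorm => P [Y [Pu hcol hAPY hsum]].
set Pi := invmx P.
set As := dual_mx ths Es.
case: hEs => horth _.
have hEsP : forall i, Es i *m P = P *m delta_mx i i.
  move=> i; apply: colext => k.
  have [w hw] := hcol k.
  rewrite -mulmxA -colE hw mulmxA horth -mulmxA mul_delta_mx_cond.
  case: (eqVneq i k) => [->|ne]; first by rewrite mulr1n -colE hw.
  by rewrite mul0mx mulr0n mulmx0.
have hEs' : forall i, Es i = P *m delta_mx i i *m Pi by move=> i; rewrite -hEsP mulmxK.
have hY : Y = Pi *m A *m P by rewrite -mulmxA hAPY mulKmx.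
have key : forall i j, Es i *m A *m Es j = Y i j *: (P *m delta_mx i j *m Pi).
  move=> i j; rewrite !hEs'.
  have -> : P *m delta_mx i i *m Pi *m A *m (P *m delta_mx j j *m Pi) =
    P *m (delta_mx i i *m (Pi *m A *m P) *m delta_mx j j) *m Pi by rewrite !mulmxA.
  by rewrite -hY sandwich -scalemxAr -scalemxAl.
have Yzero : forall i j, (Es i *m A *m Es j == 0) = (Y i j == 0).
  by move=> i j; rewrite key scaler_eq0 (negbTE (conj_nz _ _ _ i j Pu)) orbF.
have Ydiag : forall i, Y i i = 0.
  move=> i; have := hbip i.
  have -> : Es i *m A = P *m (delta_mx i i *m Y) *m Pi by rewrite hEs' hY !mulmxA mulmxK.
  by rewrite mxtrace_mulC mulKmx // tr_delta.
have htri : forall i j : 'I_d.+1, i.+1 != j -> (j : nat).+1 != i -> Y i j = 0.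
  move=> i j h1 h2; case: (eqVneq i j) => [->|ne]; first exact: Ydiag.
  have ne' : (i : nat) != j by [].
  apply/eqP; rewrite -Yzero; apply/eqP/hfar; lia.
have hnz : forall i j : 'I_d.+1, i.+1 = j -> Y i j != 0 /\ Y j i != 0.
  move=> i j e; split; rewrite -Yzero; apply: hnear; lia.
have hD : Pi *m As *m P = diag_mx (\row_i ths i).
  rewrite /As /dual_mx mulmx_sumr mulmx_suml diag_mx_sum_delta.
  apply: eq_bigr => i _; rewrite -scalemxAr -scalemxAl -mulmxA hEsP mulKmx // mxE.
  done.
have [V [Vu AV hEV]] := eig_basis _ _ _ _ _ hmf hprim.
set W := invmx V.
set M := W *m As *m V.
have hE : forall i k, E i *m As *m E k = M i k *: (V *m delta_mx i k *m W).
  move=> i k; rewrite !hEV.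
  have -> : V *m delta_mx i i *m W *m As *m (V *m delta_mx k k *m W) =
    V *m (delta_mx i i *m (W *m As *m V) *m delta_mx k k) *m W by rewrite !mulmxA.
  by rewrite sandwich -scalemxAr -scalemxAl.
have adj : forall i k, (E i *m As *m E k != 0) = (M i k != 0).
  by move=> i k; rewrite hE scaler_eq0 (negbTE (conj_nz _ _ _ i k Vu)) orbF.
have WA : W *m A = diag_mx (\row_k th k) *m W.
  by rewrite -{1}(mulmxK Vu A) AV !mulmxA mulVmx // mul1mx.
have rowW : forall k, row k W *m A = th k *: row k W.
  by move=> k; rewrite -row_mul WA row_mul row_diag_mx mxE -scalemxAl -rowE.
have rowWnz : forall k, row k W != 0.
  move=> k; apply/negP => /eqP h.
  have : row k (W *m V) = 0 by rewrite row_mul h mul0mx.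
  rewrite mulVmx // row1 => /matrixP /(_ 0 k); rewrite !mxE !eqxx /= => /eqP.
  by rewrite oner_eq0.
have rowAs : forall i, row i W *m As = \sum_k M i k *: row k W.
  move=> i; rewrite -row_mul; have -> : W *m As = M *m W by rewrite /M mulmxK.
  by rewrite row_mul mulmx_sum_row; apply: eq_bigr => k _; rewrite mxE.
rewrite -/As in htail; case: htail => ht1 ht2.
set t0 := th ord0; set t1 := th (inord 1).
have ord01 : (inord 1 : 'I_d.+1) != ord0.
  by apply/negP => /eqP /(congr1 val); rewrite /= inordK //; lia.
have t01 : t0 != t1.
  by apply/negP => /eqP /(hmf.1) /eqP; rewrite eq_sym (negbTE ord01).
have cond0 : row ord0 W *m As *m (A - t0%:M) *m (A - t1%:M) = 0.
  rewrite rowAs !mulmx_suml; apply: big1 => k _; rewrite -!scalemxAl (chain2 _ _ _ _ _ _ _ (rowW k)) scalerA.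
  apply/eqP; rewrite scaler_eq0 !mulf_eq0 !subr_eq0.
  case: (eqVneq k ord0) => [->|k0]; first by rewrite eqxx !orbT.
  case: (eqVneq k (inord 1)) => [->|k1]; first by rewrite eqxx !orbT.
  apply/orP; left; apply/orP; left; apply/negPn/negP => hm.
  by move: k1; rewrite (ht1 k) ?eqxx //; split; [rewrite eq_sym | rewrite adj].
have [c cond1] : exists c, row (inord 1) W *m As *m (A - t0%:M) *m (A - t1%:M) *m (A - c%:M) = 0.
  case: (boolP [exists k, [&& k != ord0, k != inord 1 & M (inord 1) k != 0]]).
    move=> /existsP [k0 /and3P [k0a k0b k0c]]; exists (th k0).
    rewrite rowAs !mulmx_suml; apply: big1 => k _; rewrite -!scalemxAl (chain3 _ _ _ _ _ _ _ _ (rowW k)) scalerA.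
    apply/eqP; rewrite scaler_eq0 !mulf_eq0 !subr_eq0.
    case: (eqVneq k ord0) => [->|kk0]; first by rewrite eqxx !orbT.
    case: (eqVneq k (inord 1)) => [->|kk1]; first by rewrite eqxx !orbT.
    case hm: (M (inord 1) k == 0); first by apply/orP; left; apply/orP; left.
    have -> : k = k0.
      apply: (ht2 k k0) => //; split; rewrite ?adj ?hm // eq_sym //.
    by rewrite eqxx !orbT.
  move=> /existsPn hno; exists 0.
  rewrite rowAs !mulmx_suml; apply: big1 => k _; rewrite -!scalemxAl (chain3 _ _ _ _ _ _ _ _ (rowW k)) scalerA.
  apply/eqP; rewrite scaler_eq0 !mulf_eq0 !subr_eq0.
  case: (eqVneq k ord0) => [->|k0]; first by rewrite eqxx !orbT.
  case: (eqVneq k (inord 1)) => [->|k1]; first by rewrite eqxx !orbT.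
  have := hno k; rewrite k0 k1 /= negbK => ->; by [].
have hYa : forall a, Y - a%:M = Pi *m (A - a%:M) *m P.
  by move=> a; rewrite hY mulmxBr mulmxBl mul_mx_scalar -scalemxAl mulVmx // scalemx1.
have rownz : forall k, row k W *m P != 0.
  move=> k; apply/negP => /eqP h; have := rowWnz k.
  by rewrite -(mulmxK Pu (row k W)) h mul0mx eqxx.
have roweig : forall k, (row k W *m P) *m Y = th k *: (row k W *m P).
  by move=> k; rewrite -mulmxA -hAPY mulmxA rowW -scalemxAl.
have H1 : (row ord0 W *m P) *m diag_mx (\row_i ths i) *m (Y - t0%:M) *m (Y - t1%:M) = 0.
  by rewrite -hD !hYa !conjP // cond0 mul0mx.
have H2 : (row (inord 1) W *m P) *m diag_mx (\row_i ths i) *m (Y - t0%:M) *m (Y - t1%:M)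
   *m (Y - c%:M) = 0.
  by rewrite -hD !hYa !conjP // cond1 mul0mx.
have [K hK] := Ymain _ _ Y t0 htri hnz hsum hd ths t1 c _ _ hths t01 (roweig ord0) (rownz ord0)
  (roweig (inord 1)) (rownz (inord 1)) H1 H2.
exists K => j hj; rewrite hK //; apply: mulfK; rewrite subr_eq0.
by apply/negP => /eqP /hths /(congr1 val); rewrite /= !inordK; lia.
Qed.
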